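(* Fix integers $m \ge 1$ and $n_1,\dots,n_m \ge 2$, and consider the $m$-dimensional single parity-check product code transmitted over the binary erasure channel with erasure probability $\epsilon \in [0,1]$. Let $P_{\mathrm{SC}}$ be its block error probability under successive cancellation decoding and $P_{\mathrm{E}}$ its block error probability under Elias' decoding (both defined in the context). Then \[ P_{\mathrm{SC}} \le P_{\mathrm{E}}. \]
   Context: Index set and code. Let $A = \{1,\dots,n_1\}\times\cdots\times\{1,\dots,n_m\}$. The code is the set of binary arrays $x: A \to \{0,1\}$ in which every line in every direction $\ell$ has even weight; a line in direction $\ell$ is obtained by fixing all coordinates except the $\ell$-th. This is the product of the $(n_\ell, n_\ell-1)$ single parity-check codes. Its information positions are $A_{\mathrm{info}} = \{a : a_\ell \le n_\ell-1 \text{ for all } \ell\}$. Channel. Each entry is independently erased with probability $\epsilon$ and otherwise received correctly. Notation. For $\ell = 0,\dots,m$ let $A_\ell = \{a \in A : a_i \le n_i-1 \text{ for } i \le \ell\}$. For $a \in A$ and $b \in \{1,\dots,n_\ell\}$, let $a[\ell\leftarrow b]$ denote $a$ with its $\ell$-th coordinate replaced by $b$. Set $E_0(a) = S_0(a) = $ ''entry $a$ is not erased''. Elias' decoder. This is a one-sweep decoder over dimensions $1,\dots,m$. For $\ell \ge 1$ and $a \in A_\ell$, $E_\ell(a)$ is true iff $E_{\ell-1}(a)$ is true, or $E_{\ell-1}(a[\ell\leftarrow b])$ is true for all $b \in \{1,\dots,n_\ell\}\setminus\{a_\ell\}$. Then $P_{\mathrm{E}} = \Pr[\exists\, a \in A_{\mathrm{info}}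 : E_m(a) \text{ false}]$. Successive cancellation decoder. Information bits are decoded in lexicographic order of $(a_1,\dots,a_m)$, and local SPC decisions exploit previously decided bits; over the erasure channel decisions are never wrong, only erased. Its block error event coincides with the following. For $\ell \ge 1$ and $a \in A_\ell$, $S_\ell(a)$ is true iff $S_{\ell-1}(a)$ is true, or $S_{\ell-1}(a[\ell\leftarrow b])$ is true for all $b$ with $a_\ell < b \le n_\ell$. Then $P_{\mathrm{SC}} = \Pr[\exists\, a \in A_{\mathrm{info}} : S_m(a) \text{ false}]$. *)

(* Defs.v *)
From mathcomp Require Import all_boot all_order all_algebra.
Set Implicit Arguments. Unset Strict Implicit. Unset Printing Implicit Defensive.
Import Order.TTheory GRing.Theory Num.Theory.

(* Coordinates are 0-based: the paper's coordinate a_l in {1..n_l} is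
   represented by a l in {0..n_l - 1}.  Positions are functions
   'I_m -> 'I_(Nmax n) where Nmax n = max_l n_l; the index set A is the set
   of those with a l < n l for every l. *)

Section SPC.
Variables (m : nat) (n : 'I_m -> nat).

Definition Nmax : nat := \max_(l < m) n l.
Definition pos := {ffun 'I_m -> 'I_Nmax}.

Definition Aset : {set pos} := [set a : pos | [forall l, a l < n l]].
(* information positions: a_l <= n_l - 1 (1-based), i.e. a l < n l - 1 (0-based) *)
Definition Ainfo : {set pos} := [set a : pos | [forall l, (a l).+1 < n l]].

Definition upd (a : pos) (l : 'I_m) (b : 'I_Nmax) : pos :=
  [ffun j => if j == l then b else a j].

Definition Estep (l : 'I_m) (P : pos -> bool) (a : pos) : bool :=
  P a || [forall b : 'I_Nmax, ((b < n l) && (b != a l)) ==> P (upd a l b)].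

Definition Sstep (l : 'I_m) (P : pos -> bool) (a : pos) : bool :=
  P a || [forall b : 'I_Nmax, ((a l < b) && (b < n l)) ==> P (upd a l b)].

(* E_0 = S_0 = "not erased"; e is the set of erased entries. *)
Definition notErased (e : {set pos}) (a : pos) : bool := a \notin e.

(* E_m and S_m: sweep over dimensions 1..m in order (enum 'I_m is increasing). *)
Definition E_m (e : {set pos}) : pos -> bool :=
  foldl (fun P l => Estep l P) (notErased e) (enum 'I_m).
Definition S_m (e : {set pos}) : pos -> bool :=
  foldl (fun P l => Sstep l P) (notErased e) (enum 'I_m).

(* Probability, under the BEC with erasure probability eps (each entry of A
   erased independently), of an event on erasure patterns e \subset A. *)
Definition prob (R : numDomainType) (eps : R) (ev : {set pos} -> bool) : R :=
  \sum_(e : {set pos} | (e \subset Aset) && ev e)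
     eps ^+ #|e| * (1 - eps) ^+ (#|Aset| - #|e|).

Definition P_E (R : numDomainType) (eps : R) : R :=
  prob eps (fun e => [exists a in Ainfo, ~~ E_m e a]).
Definition P_SC (R : numDomainType) (eps : R) : R :=
  prob eps (fun e => [exists a in Ainfo, ~~ S_m e a]).
End SPC.

(* Main.v *)
Require Import Defs.
From mathcomp Require Import all_boot all_order all_algebra.
Import Order.TTheory GRing.Theory Num.Theory.
Local Open Scope ring_scope.

Lemma step_le m (n : 'I_m -> nat) l (P Q : pos n -> bool) :
  (forall a, P a -> Q a) -> forall a, Estep l P a -> Sstep l Q a.
Proof.
rewrite /Estep /Sstep => H a /orP [/H -> //| /forallP F]; apply/orP; right.
apply/forallP=> b; apply/implyP=> /andP[ab bn]; apply: H.
have nb : b != a l by apply/eqP=> E; rewrite E ltnn in ab.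
by have := F b; rewrite bn nb.
Qed.

Lemma fold_le m (n : 'I_m -> nat) (s : seq 'I_m) (P Q : pos n -> bool) :
  (forall a, P a -> Q a) -> forall a,
  foldl (fun P l => Estep l P) P s a -> foldl (fun P l => Sstep l P) Q s a.
Proof.
elim: s P Q => [|l s IH] P Q H //=; apply: IH; exact: step_le.
Qed.

Theorem theorem2 (R : realFieldType) (m : nat) (n : 'I_m -> nat) (eps : R) :
  (1 <= m)%N -> (forall l, 2 <= n l)%N -> 0 <= eps <= 1 ->
  P_SC n eps <= P_E n eps.
Proof.
move=> _ _ /andP[e0 e1].
rewrite /P_SC /P_E /prob [X in X <= _]big_mkcond [X in _ <= X]big_mkcond /=.
apply: ler_sum => e _.
have t0 : 0 <= eps ^+ #|e| * (1 - eps) ^+ (#|Aset n| - #|e|).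
  by rewrite mulr_ge0 ?exprn_ge0 // subr_ge0.
case: (e \subset Aset n) => //=.
case: ifP => [/existsP [a /andP [ai na]]|_].
  have -> : [exists a0 in Ainfo n, ~~ E_m (n:=n) e a0].
    apply/existsP; exists a; rewrite ai /=; apply: contra na.
    exact: fold_le.
  by [].
by case: ifP.
Qed.
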